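(* With the setting in the context, the Hamiltonian $H=-\sum_n\sum_{x\in K_n}A_x^0-\sum_n\sum_{y\in K_n}B_y^0$ satisfies $HA_x^r=A_x^rH$ for all $n$, all $x\in K_n$ and all $r\in\widehat G_{n+1}$, and $HB_y^g=B_y^gH$ for all $m$, all $y\in K_m$ and all $g\in G_{m-1}$.
   Context: $(C_\bullet,\partial^C_\bullet)$ is a chain complex with each $C_n$ free abelian on a finite set $K_n$, $K_n\ne\emptyset$ for finitely many $n$; $(G_\bullet,\partial^G_\bullet)$ is a chain complex of finite abelian groups, $\widehat{G}_k=\mathrm{Hom}(G_k,U(1))$. $\mathrm{hom}(C,G)^p=\prod_n\mathrm{Hom}(C_n,G_{n-p})$ with $(\delta^pf)_n=f_{n-1}\partial^C_n-(-1)^p\partial^G_{n-p}f_n$. $\mathrm{hom}(C,G)_p=\mathrm{Hom}(\mathrm{hom}(C,G)^p,U(1))$ (written additively), $\chi_m(f)=m(f)$, $\delta_1m=m\circ\delta^0$. $\mathcal H=\bigotimes_n\bigotimes_{x\in K_n}\mathbb C[G_n]$ with orthonormal basis $|f\rangle$, $f\in\mathrm{hom}(C,G)^0$; $P_t|f\rangle=|f+t\rangle$, $Q_m|f\rangle=\chi_m(f)|f\rangle$; $A_t=P_{\delta^{-1}t}$ ($t\in\mathrm{hom}(C,G)^{-1}$), $B_m=Q_{\delta_1m}$ ($m\in\mathrm{hom}(C,G)_1$). For $x\in K_n$, $g\in G_{n-p}$, $gx^*\in\mathrm{hom}(C,G)^p$ has $n$-th component sending $x\mapsto g$ and other elements of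 $K_n$ to $0$, other components $0$; for $r\in\widehat G_{n-p}$, $rx_*(f)=r(f_n(x))$. For $x\in K_n$: $A_x^r=\frac1{|G_{n+1}|}\sum_{h\in G_{n+1}}r(h)A_{hx^*}$ ($r\in\widehat G_{n+1}$), $B_x^g=\frac1{|G_{n-1}|}\sum_{\rho\in\widehat G_{n-1}}\rho(g)B_{\rho x_*}$ ($g\in G_{n-1}$); superscript $0$ denotes the trivial character, resp. the zero element. *)

(* Defs.v *)
From HB Require Import structures.
From mathcomp Require Import all_boot all_order all_algebra algC.
From mathcomp Require Import classical_sets fsbigop.
Unset Implicit Arguments.
Import Order.TTheory GRing.Theory Num.Theory.
Local Open Scope ring_scope.

Definition transp {I : Type} (F : I -> Type) {i j : I} (e : i = j) (a : F i) : F j :=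
  eq_rect i F a j e.
Arguments transp {I} F {i j} e a.

Definition single {I : eqType} (F : I -> Type) (i : I) (a : F i)
    (d : forall j, F j) : forall j, F j :=
  fun j => match @eqP I i j with ReflectT e => transp F e a | ReflectF _ => d j end.

Definition is_U1char (Z : finZmodType) (r : {ffun Z -> algC}) : Prop :=
  (forall a b : Z, r (a + b) = r a * r b) /\ (forall a : Z, `|r a| = 1).

Definition hatG (Z : finZmodType) : classical_sets.set {ffun Z -> algC} :=
  [set r | is_U1char Z r]%classic.

Definition triv_char (Z : finZmodType) : {ffun Z -> algC} := [ffun _ => 1].

Lemma eq_sub1_add1 (n : int) : n - 1 + 1 = n. Proof. by rewrite subrK. Qed.
Lemma eq_add1_sub1 (n : int) : n + 1 - 1 = n. Proof. by rewrite addrK. Qed.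

Section Model.
(* C_n = free abelian group on the finite set K n;
   boundary dC n : C_n -> C_{n-1} is given by its integer matrix
   dC n x = \sum_(y : K (n-1)) cC n x y * y. *)
Variable K : int -> finType.
Variable cC : forall n : int, K n -> K (n - 1) -> int.
Variable G : int -> finZmodType.
Variable dG : forall k : int, G k -> G (k - 1).

(* hom(C,G)^p for p = -1, 0, 1 : n-th component Hom(C_n, G_{n-p}) = maps K n -> G (n-p) *)
Definition homm1 := forall n : int, {ffun K n -> G (n + 1)}.
Definition hom0  := forall n : int, {ffun K n -> G n}.
Definition hom1  := forall n : int, {ffun K n -> G (n - 1)}.

(* (f o dC_n)(x) for f_{n-1} : K (n-1) -> Z *)
Definition precomp (n : int) (Z : zmodType) (f : K (n - 1) -> Z) (x : K n) : Z :=
  \sum_(y : K (n - 1)) f y *~ cC n x y.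
Arguments precomp n {Z} f x.

(* delta^{-1} : (delta t)_n = t_{n-1} o dC_n - (-1)^{-1} dG_{n+1} o t_n
                            = t_{n-1} o dC_n + dG_{n+1} o t_n *)
Definition delta_m1 (t : homm1) : hom0 := fun n =>
  [ffun x : K n => transp G (eq_sub1_add1 n) (precomp n (fun y => t (n - 1) y) x)
                 + transp G (eq_add1_sub1 n) (dG (n + 1) (t n x))].

Definition delta_0 (f : hom0) : hom1 := fun n =>
  [ffun x : K n => precomp n (fun y => f (n - 1) y) x - dG n (f n x)].

Definition add0 (f g : hom0) : hom0 := fun n => [ffun x => f n x + g n x].
Definition opp0 (f : hom0) : hom0 := fun n => [ffun x => - f n x].

(* States: |psi> = \sum_f psi f |f>, f in hom(C,G)^0 *)
Definition state := hom0 -> algC.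
Definition op := state -> state.

(* P_t |f> = |f + t>,  i.e. (P_t psi)(f) = psi (f - t) *)
Definition P (t : hom0) : op := fun psi f => psi (add0 f (opp0 t)).
Definition Q (m : hom0 -> algC) : op := fun psi f => m f * psi f.

Definition A (t : homm1) : op := P (delta_m1 t).
(* m in hom(C,G)_1 = Hom(hom^1, U(1)); delta_1 m = m o delta^0 *)
Definition B (m : hom1 -> algC) : op := Q (fun f => m (delta_0 f)).

Definition upstar (n : int) (x : K n) (h : G (n + 1)) : homm1 :=
  single (fun j => {ffun K j -> G (j + 1)}) n [ffun y => if y == x then h else 0]
         (fun _ => 0).
Definition lowstar (n : int) (x : K n) (rho : {ffun G (n - 1) -> algC}) : hom1 -> algC :=
  fun f => rho (f n x).

Definition Axr (n : int) (x : K n) (r : {ffun G (n + 1) -> algC}) : op :=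
  fun psi f => (#|G (n + 1)|%:R)^-1 * \sum_(h : G (n + 1)) r h * A (upstar n x h) psi f.

Definition Bxg (n : int) (x : K n) (g : G (n - 1)) : op :=
  fun psi f => (#|G (n - 1)|%:R)^-1 *
    (\sum_(rho \in hatG (G (n - 1))) rho g * B (lowstar n x rho) psi f).

(* H = - sum_n sum_{x in K_n} A_x^0 - sum_n sum_{y in K_n} B_y^0, where n ranges over
   a duplicate-free list s containing all degrees n with K n nonempty *)
Definition Ham (s : seq int) : op := fun psi f =>
  - (\sum_(n <- s) \sum_(x : K n) Axr n x (triv_char (G (n + 1))) psi f)
  - (\sum_(n <- s) \sum_(y : K n) Bxg n y (0 : G (n - 1)) psi f).

End Model.

(* Main.v *)
Require Import Defs.
From HB Require Import structures.
From mathcomp Require Import all_boot all_order all_algebra algC.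
From mathcomp Require Import classical_sets fsbigop.
From Stdlib Require Import FunctionalExtensionality.
Import GRing.Theory Num.Theory.
Local Open Scope ring_scope.

Section Tr.
Variable G : int -> finZmodType.
Lemma transpD i j (e : i = j) (a b : G i) : transp G e (a + b) = transp G e a + transp G e b.
Proof. by case: j / e. Qed.
Lemma transp0 i j (e : i = j) : transp G e 0 = 0.
Proof. by case: j / e. Qed.
Lemma transpMz i j (e : i = j) (a : G i) n : transp G e (a *~ n) = transp G e a *~ n.
Proof. by case: j / e. Qed.
Lemma transp_sum i j (e : i = j) (I : Type) (r : seq I) (F : I -> G i) :
  transp G e (\sum_(k <- r) F k) = \sum_(k <- r) transp G e (F k).
Proof. by case: j / e. Qed.
Variable dG : forall k : int, G k -> G (k - 1).
Lemma dG_transp k j (e : k = j) (e' : k - 1 = j - 1) a :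
  dG j (transp G e a) = transp G e' (dG k a).
Proof. case: j / e e' => e'. by rewrite (eq_irrelevance e' erefl). Qed.
End Tr.

Section S.
Variable K : int -> finType.
Variable cC : forall n : int, K n -> K (n - 1) -> int.
Variable G : int -> finZmodType.
Variable dG : forall k : int, G k -> G (k - 1).
Hypothesis dG_add : forall (k : int) (a b : G k), dG k (a + b) = dG k a + dG k b.
Hypothesis dC_sq : forall (n : int) (x : K n) (z : K (n - 1 - 1)),
      \sum_(y : K (n - 1)) cC n x y * cC (n - 1) y z = 0.
Hypothesis dG_sq : forall (k : int) (a : G k), dG (k - 1) (dG k a) = 0.

Lemma dG0 k : dG k 0 = 0.
Proof. have h := dG_add k 0 0; rewrite addr0 in h.
apply: (addrI (dG k 0)); by rewrite addr0 -h. Qed.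
Lemma dGN k a : dG k (- a) = - dG k a.
Proof. apply: (addrI (dG k a)); by rewrite -dG_add !subrr dG0. Qed.
Lemma dGB k a b : dG k (a - b) = dG k a - dG k b.
Proof. by rewrite dG_add dGN. Qed.

Local Notation d0 := (delta_0 K cC G dG).
Local Notation dm1 := (delta_m1 K cC G dG).
Local Notation sh f t := (add0 K G f (opp0 K G t)).

Lemma d0_sh f u m y : d0 (sh f u) m y = d0 f m y - d0 u m y.
Proof.
rewrite /delta_0 !ffunE /precomp /add0 /opp0 /=.
under eq_bigr do rewrite !ffunE mulrzBl.
rewrite sumrB dGB.
by rewrite !opprD !opprK addrACA.
Qed.

Lemma dG_sum k (I : Type) (r : seq I) (F : I -> G k) :
  dG k (\sum_(i <- r) F i) = \sum_(i <- r) dG k (F i).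
Proof. exact: (big_morph _ (dG_add k) (dG0 k)). Qed.
Lemma dG_mulrn k (a : G k) n : dG k (a *+ n) = dG k a *+ n.
Proof. elim: n => [|n IH]; first by rewrite !mulr0n dG0. by rewrite !mulrS dG_add IH. Qed.
Lemma dG_mulz k (a : G k) n : dG k (a *~ n) = dG k a *~ n.
Proof. case: n => n; first exact: dG_mulrn. by rewrite !NegzE !mulrNz dGN -!pmulrn dG_mulrn. Qed.

Lemma d0_dm1 t m y : d0 (dm1 t) m y = 0.
Proof.
rewrite /delta_0 /delta_m1 /precomp !ffunE.
under eq_bigr do rewrite !ffunE mulrzDl.
rewrite big_split /= dG_add.
rewrite (dG_transp _ dG _ _ (eq_add1_sub1 m) (congr1 (fun z => z - 1) (eq_add1_sub1 m))) dG_sq transp0 addr0.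
rewrite (dG_transp _ dG _ _ (eq_sub1_add1 m) (eq_add1_sub1 (m - 1))).
rewrite dG_sum transp_sum.
rewrite [X in _ + _ - X](eq_bigr (fun k => transp (fun x => G x) (eq_add1_sub1 (m - 1)) (dG _ (t (m - 1) k)) *~ cC m y k)); last by move=> k _; rewrite dG_mulz transpMz.
rewrite addrK.
under eq_bigr do rewrite transp_sum mulrz_suml.
rewrite exchange_big /= big1 // => w _.
under eq_bigr do rewrite transpMz -mulrzA mulrC.
by rewrite -mulrz_sumr dC_sq mulr0z.
Qed.

Lemma sh_comm f t u : sh (sh f t) u = sh (sh f u) t.
Proof.
apply: functional_extensionality_dep => n; apply/ffunP => x.
by rewrite /add0 /opp0 !ffunE addrAC.
Qed.

Definition beta m (y : K m) (g : G (m - 1)) (f : hom0 K G) : algC :=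
  (#|G (m - 1)|%:R)^-1 * \sum_(rho \in hatG (G (m - 1))) rho g * rho (d0 f m y).

Lemma BxgE m y g psi f : Bxg K cC G dG m y g psi f = beta m y g f * psi f.
Proof.
rewrite /Bxg /B /Q /lowstar /beta -mulrA mulr_fsuml; congr (_ * _).
by apply: eq_fsbigr => rho _; rewrite mulrA.
Qed.

Lemma beta_sh m y g f t : beta m y g (sh f (dm1 t)) = beta m y g f.
Proof.
rewrite /beta; congr (_ * _); apply: eq_fsbigr => rho _.
by rewrite d0_sh d0_dm1 subr0.
Qed.

Lemma dsum (I J : finType) (a b : algC) (u : I -> algC) (v : J -> algC) (F : I -> J -> algC) :
 a * (\sum_i u i * (b * \sum_j v j * F i j)) = a * b * \sum_i \sum_j u i * v j * F i j.
Proof.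
rewrite -mulrA; congr (_ * _); rewrite mulr_sumr; apply: eq_bigr => i _.
rewrite mulrCA; congr (_ * _); rewrite mulr_sumr; apply: eq_bigr => j _; by rewrite mulrA.
Qed.

Local Notation Ax := (Axr K cC G dG).
Local Notation Bx := (Bxg K cC G dG).

Lemma AA n x r n' x' r' psi f : Ax n x r (Ax n' x' r' psi) f = Ax n' x' r' (Ax n x r psi) f.
Proof.
rewrite /Axr /A /P !dsum [in RHS]exchange_big /=; congr (_ * _); first by rewrite mulrC.
apply: eq_bigr => i _; apply: eq_bigr => j _; by rewrite sh_comm [r' j * _]mulrC.
Qed.

Lemma AB n x r m y g psi f : Ax n x r (Bx m y g psi) f = Bx m y g (Ax n x r psi) f.
Proof.
rewrite /Axr /A /P; under eq_bigr do rewrite BxgE beta_sh.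
rewrite BxgE [RHS]mulrCA; congr (_ * _); rewrite mulr_sumr; apply: eq_bigr => h _; by rewrite mulrCA.
Qed.

Lemma BB m y g m' y' g' psi f : Bx m y g (Bx m' y' g' psi) f = Bx m' y' g' (Bx m y g psi) f.
Proof. by rewrite !BxgE mulrCA. Qed.

Lemma Ax_add n x r F F' f : Ax n x r (fun f => F f + F' f) f = Ax n x r F f + Ax n x r F' f.
Proof. by rewrite /Axr /A /P -mulrDr -big_split; congr (_ * _); apply: eq_bigr => h _; rewrite mulrDr. Qed.
Lemma Ax_opp n x r F f : Ax n x r (fun f => - F f) f = - Ax n x r F f.
Proof. by rewrite /Axr /A /P -mulrN -sumrN; congr (_ * _); apply: eq_bigr => h _; rewrite mulrN. Qed.
Lemma Ax_sum n x r (I : Type) (rr : seq I) (F : I -> state K G) f :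
  Ax n x r (fun f => \sum_(i <- rr) F i f) f = \sum_(i <- rr) Ax n x r (F i) f.
Proof.
rewrite /Axr /A /P; under eq_bigr do rewrite mulr_sumr.
by rewrite exchange_big /= mulr_sumr.
Qed.
Lemma Bx_add n x r F F' f : Bx n x r (fun f => F f + F' f) f = Bx n x r F f + Bx n x r F' f.
Proof. by rewrite !BxgE mulrDr. Qed.
Lemma Bx_opp n x r F f : Bx n x r (fun f => - F f) f = - Bx n x r F f.
Proof. by rewrite !BxgE mulrN. Qed.
Lemma Bx_sum n x r (I : Type) (rr : seq I) (F : I -> state K G) f :
  Bx n x r (fun f => \sum_(i <- rr) F i f) f = \sum_(i <- rr) Bx n x r (F i) f.
Proof. rewrite BxgE mulr_sumr; apply: eq_bigr => i _; by rewrite BxgE. Qed.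

Lemma gen (s : seq int) (X : op K G)
  (Xadd : forall F F' f, X (fun f => F f + F' f) f = X F f + X F' f)
  (Xopp : forall F f, X (fun f => - F f) f = - X F f)
  (Xsum : forall (I : Type) (rr : seq I) (F : I -> state K G) f,
     X (fun f => \sum_(i <- rr) F i f) f = \sum_(i <- rr) X (F i) f)
  (XA : forall n x psi f, X (Ax n x (triv_char _) psi) f = Ax n x (triv_char _) (X psi) f)
  (XB : forall n x psi f, X (Bx n x 0 psi) f = Bx n x 0 (X psi) f) psi :
  Ham K cC G dG s (X psi) = X (Ham K cC G dG s psi).
Proof.
apply: functional_extensionality => f.
rewrite /Ham /= Xadd !Xopp !Xsum.
congr (- _ - _); apply: eq_bigr => n _; rewrite Xsum; apply: eq_bigr => x _.
  by rewrite XA.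
by rewrite XB.
Qed.
End S.
Theorem lemma6
  (K : int -> finType) (cC : forall n : int, K n -> K (n - 1) -> int)
  (G : int -> finZmodType) (dG : forall k : int, G k -> G (k - 1))
  (dG_add : forall (k : int) (a b : G k), dG k (a + b) = dG k a + dG k b)
  (dC_sq : forall (n : int) (x : K n) (z : K (n - 1 - 1)),
      \sum_(y : K (n - 1)) cC n x y * cC (n - 1) y z = 0)
  (dG_sq : forall (k : int) (a : G k), dG (k - 1) (dG k a) = 0)
  (s : seq int) (s_uniq : uniq s)
  (s_supp : forall n : int, n \notin s -> #|K n| = 0%N) :
  (forall (n : int) (x : K n) (r : {ffun G (n + 1) -> algC}),
      is_U1char (G (n + 1)) r ->
      forall psi : state K G,
        Ham K cC G dG s (Axr K cC G dG n x r psi) = Axr K cC G dG n x r (Ham K cC G dG s psi))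
  /\
  (forall (m : int) (y : K m) (g : G (m - 1)) (psi : state K G),
        Ham K cC G dG s (Bxg K cC G dG m y g psi) = Bxg K cC G dG m y g (Ham K cC G dG s psi)).
Proof.
Proof.
have AB' := AB K cC G dG dG_add dC_sq dG_sq.
split.
- move=> n x r _ psi.
  apply: (gen K cC G dG s (Axr K cC G dG n x r)).
  + exact: (Ax_add K cC G dG n x r).
  + exact: (Ax_opp K cC G dG n x r).
  + exact: (Ax_sum K cC G dG n x r).
  + move=> n0 x0 psi0 f; exact: (AA K cC G dG n x r n0 x0 _ psi0 f).
  + move=> n0 x0 psi0 f; exact: (AB' n x r n0 x0 _ psi0 f).
- move=> m y g psi.
  apply: (gen K cC G dG s (Bxg K cC G dG m y g)).
  + exact: (Bx_add K cC G dG m y g).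
  + exact: (Bx_opp K cC G dG m y g).
  + exact: (Bx_sum K cC G dG m y g).
  + move=> n0 x0 psi0 f; exact: (esym (AB' n0 x0 _ m y g psi0 f)).
  + move=> n0 x0 psi0 f; exact: (BB K cC G dG m y g n0 x0 _ psi0 f).
Qed.
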